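(* Let $K$ be an infinite field, let $n\geq 5$ and $r$ be integers with $1<r<n-2$, and let $p(x,y)=[x,y]^r=(xy-yx)^r\in K\langle x,y\rangle$. Then $\mathrm{ord}(p)=r$ and $p(T_n(K))\neq T_n(K)^{(r-1)}$.
   Context: $T_n(K)$ denotes the algebra of $n\times n$ upper triangular matrices over $K$; $T_n(K)^{(t)}$ denotes the set of upper triangular matrices whose $(i,j)$ entries vanish whenever $j-i\leq t$. $p(T_n(K))=\{p(a,b):a,b\in T_n(K)\}$. The order $\mathrm{ord}(p)$ is the least positive integer $r$ with $p(T_r(K))=\{0\}$ but $p(T_{r+1}(K))\neq\{0\}$ (with $T_1(K)=K$). *)

(* Defs.v *)
From HB Require Import structures.
From mathcomp Require Import all_boot all_order all_algebra.
Set Implicit Arguments. Unset Strict Implicit. Unset Printing Implicit Defensive.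
Import GRing.Theory.
Local Open Scope ring_scope.

Section Defs.
Variable K : fieldType.

Definition upper_tri (n : nat) (A : 'M[K]_n) : Prop :=
  forall i j : 'I_n, (j < i)%N -> A i j = 0.

Definition upper_tri_t (t n : nat) (A : 'M[K]_n) : Prop :=
  upper_tri A /\ forall i j : 'I_n, (j <= i + t)%N -> A i j = 0.

Definition commpow (r n : nat) (a b : 'M[K]_n) : 'M[K]_n :=
  (a *m b - b *m a) ^+ r.

Definition in_image_p (r n : nat) (A : 'M[K]_n) : Prop :=
  exists a b : 'M[K]_n, upper_tri a /\ upper_tri b /\ A = commpow r a b.

Definition p_vanishes (r m : nat) : Prop :=
  forall a b : 'M[K]_m, upper_tri a -> upper_tri b -> commpow r a b = 0.

Definition ord_cond (r q : nat) : Prop := p_vanishes r q /\ ~ p_vanishes r q.+1.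
Definition ord_is (r q : nat) : Prop :=
  (0 < q)%N /\ ord_cond r q /\ forall m : nat, (0 < m < q)%N -> ~ ord_cond r m.
End Defs.

(* Main.v *)
Require Import Defs.
From mathcomp Require Import all_boot all_order all_algebra.
From mathcomp Require Import zify.
Local Open Scope ring_scope.
Import GRing.Theory.
Set Implicit Arguments. Unset Strict Implicit. Unset Printing Implicit Defensive.

Section Aux.
Variable K : fieldType.

Definition strict n (c : 'M[K]_n) := forall i j : 'I_n, (j <= i)%N -> c i j = 0.

Lemma pow_zero n (c : 'M[K]_n) : strict c ->
  forall k (i j : 'I_n), (j < i + k)%N -> (c ^+ k) i j = 0.
Proof.
move=> sc; elim=> [|k IH] i j hij.
  rewrite expr0 -idmxE mxE.
  case: eqP => [e|_]; last by rewrite mulr0n.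
  by move: hij; rewrite e addn0 ltnn.
rewrite exprSr -mulmxE mxE big1 // => l _.
case: (ltnP l (i + k)) => hl.
  by rewrite IH // mul0r.
by rewrite sc ?mulr0 //; lia.
Qed.

Lemma pow_diag n (c : 'M[K]_n.+1) : strict c ->
  forall k (i j : 'I_n.+1), nat_of_ord j = (i + k)%N ->
  (c ^+ k) i j = \prod_(t < k) c (inord (i + t)) (inord (i + t).+1).
Proof.
move=> sc; elim=> [|k IH] i j hij.
  rewrite expr0 big_ord0 -idmxE mxE.
  have -> : i = j by apply: val_inj; rewrite /= hij addn0.
  by rewrite eqxx.
have hik : (i + k < n.+1)%N by have := ltn_ord j; lia.
rewrite exprSr -mulmxE mxE (bigD1 (inord (i + k))) //=.
rewrite big1 ?addr0.
  rewrite (IH i) ?inordK // big_ord_recr /=.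
  congr (_ * _); congr (c _ _).
  by apply: val_inj; rewrite /= inordK ?hij ?addnS //; have := ltn_ord j; lia.
move=> l hl.
have hl' : nat_of_ord l <> (i + k)%N.
  move=> e; move/eqP: hl; apply; apply: val_inj; by rewrite /= inordK.
case: (ltnP l (i + k)) => hl2.
  by rewrite pow_zero // mul0r.
by rewrite sc ?mulr0 //; lia.
Qed.

Lemma comm_entry n (a b : 'M[K]_n) : upper_tri a -> upper_tri b ->
  forall i j : 'I_n, (j <= i)%N -> (a *m b) i j = a i i * b i j.
Proof.
move=> ua ub i j hij; rewrite mxE (bigD1 i) //= big1 ?addr0 // => l hl.
have hl' : nat_of_ord l <> nat_of_ord i by move=> e; move/eqP: hl; apply; apply: val_inj.
case: (ltnP l i) => h.
  by rewrite ua // mul0r.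
by rewrite ub ?mulr0 //; lia.
Qed.

Lemma comm_strict n (a b : 'M[K]_n) : upper_tri a -> upper_tri b ->
  strict (a *m b - b *m a).
Proof.
move=> ua ub i j hij.
rewrite mxE [(- (b *m a)) _ _]mxE !comm_entry //.
case: (ltnP j i) => h.
  by rewrite (ua i j h) (ub i j h) !mulr0 subrr.
have -> : j = i by apply: val_inj; apply/eqP; rewrite eqn_leq h hij.
by rewrite mulrC subrr.
Qed.

Lemma vanish r k : (k <= r)%N -> p_vanishes K r k.
Proof.
move=> hk a b ua ub; apply/matrixP => i j; rewrite mxE /commpow.
rewrite (pow_zero (comm_strict ua ub)) //.
have := ltn_ord j; lia.
Qed.

End Aux.

Theorem mainTheorem9 (K : fieldType)
  (K_infinite : forall s : seq K, exists x : K, x \notin s)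
  (n r : nat) (hn : (5 <= n)%N) (hr1 : (1 < r)%N) (hr2 : (r < n - 2)%N) :
  ord_is K r r /\
  ~ (forall A : 'M[K]_n, in_image_p r A <-> upper_tri_t (r - 1) A).
Proof.
split.
  split; first by lia.
  split; last first.
    move=> m hm [_ hv]; apply: hv; apply: vanish; lia.
  split; first exact: vanish.
  case: r hr1 hr2 => // r' _ _.
  pose a : 'M[K]_r'.+2 := \matrix_(i, j) if i == j then (i : nat)%:R else 0.
  pose b : 'M[K]_r'.+2 := \matrix_(i, j) if (j == i.+1 :> nat) then 1 else 0.
  have ua : upper_tri a.
    move=> i j h; rewrite mxE; case: eqP => // e; by move: h; rewrite e ltnn.
  have ub : upper_tri b.
    move=> i j h; rewrite mxE; case: eqP => // e; lia.
  move=> /(_ a b ua ub) /matrixP /(_ ord0 ord_max).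
  rewrite /commpow (pow_diag (comm_strict ua ub) (k:=r'.+1)) //.
  rewrite mxE => /eqP; rewrite prodf_seq_eq0 => /hasP [t _ /=]; rewrite add0n.
  have ht := ltn_ord t.
  have e1 : (a *m b) (inord t) (inord t.+1) = t%:R.
    rewrite mxE (bigD1 (inord t)) //= big1 ?addr0 => [|l hl].
      by rewrite !mxE eqxx !inordK //= ?eqxx ?mulr1 //; lia.
    rewrite mxE; case: eqP => [e|_]; last by rewrite mul0r.
    by rewrite e eqxx in hl.
  have e2 : (b *m a) (inord t) (inord t.+1) = t.+1%:R.
    rewrite mxE (bigD1 (inord t.+1)) //= big1 ?addr0 => [|l hl].
      by rewrite !mxE eqxx !inordK //= ?eqxx ?mul1r //; lia.
    rewrite [a l _]mxE; case: eqP => [e|_]; last by rewrite mulr0.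
    by rewrite e eqxx in hl.
  rewrite mxE [(- (b *m a)) _ _]mxE e1 e2 -natr1 opprD addrA subrr add0r.
  by rewrite oppr_eq0 oner_eq0.
move=> H.
case: n hn hr2 H => // n' _ hr2 H.
pose A : 'M[K]_n'.+1 := \matrix_(i, j)
  if ((i == 0 :> nat) && (j == r :> nat)) || ((i == 2 :> nat) && (j == r + 2 :> nat))
  then 1 else 0.
have : upper_tri_t (r - 1) A.
  split.
    move=> i j h; rewrite mxE; case: ifP => // /orP [] /andP [/eqP e1 /eqP e2]; lia.
  move=> i j h; rewrite mxE; case: ifP => // /orP [] /andP [/eqP e1 /eqP e2]; lia.
move/H => [a [b [ua [ub eA]]]].
have sc := comm_strict ua ub.
set c := a *m b - b *m a in sc eA.
pose x (t : nat) := c (inord t) (inord t.+1).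
have E (i : nat) : (i + r < n'.+1)%N ->
    A (inord i) (inord (i + r)) = \prod_(t < r) x (i + t)%N.
  move=> hi; rewrite eA /commpow (pow_diag sc (k := r)) ?inordK //; try lia.
have := E 0%N ltac:(lia); have := E 1%N ltac:(lia); have := E 2%N ltac:(lia).
rewrite !mxE !inordK /=; try lia.
have -> : (2 + r == r + 2)%N = true by lia.
rewrite add0n eqxx /= => P2 /esym /eqP P1 P0.
have Q0 (u : nat) : (u < r)%N -> x u != 0.
  move=> hu; have := oner_neq0 K; rewrite P0 prodf_seq_neq0 => /allP /(_ (Ordinal hu)).
  by rewrite mem_index_enum /= add0n; apply.
have Q2 (u : nat) : (2 <= u < r + 2)%N -> x u != 0.
  move=> hu; have hu' : (u - 2 < r)%N by lia.
  have := oner_neq0 K; rewrite P2 prodf_seq_neq0 => /allP /(_ (Ordinal hu')).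
  have -> : (2 + (u - 2) = u)%N by lia.
  by rewrite mem_index_enum /=; apply.
move: P1; rewrite prodf_seq_eq0 => /hasP [t _ /= /eqP xt].
have ht := ltn_ord t.
case: (ltnP (1 + t) r) => h.
  by move: (Q0 _ h); rewrite xt eqxx.
have h2 : (2 <= 1 + t < r + 2)%N by lia.
by move: (Q2 _ h2); rewrite xt eqxx.
Qed.
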